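(* Let $\tau>\sigma$ be coprime positive integers with $\tau-\sigma\not\equiv2\pmod4$, and let $\rho_0\neq0$. Set $a=\tau+\sigma$, $b=\tau-\sigma$, $x=b/a\in\,]0,1[$, $k=\mathrm{round}(1/(2x))$, $\mu=\frac{\pi}{2}-k\pi x$ and $s=\mu/x$. Let $u_{\mathrm{asy}}\in\,]-\pi/2,\pi/2[$ be the unique solution of $u+\tan u=s$, and define $$\theta_{\mathrm{asy}}=\frac{\pi}{b}+\frac{2}{a}\bigl(u_{\mathrm{asy}}-s\bigr).$$ Let $\theta_c$ be the unique solution of $\dot q(\theta)=0$ near the slow-mode node $\pi/b$, i.e. with $\frac a2\theta_c=k\pi+u_c$ for some $u_c\in\,]-\pi/2,\pi/2[$, where $$\dot q(\theta)=\rho_0\Bigl(\sqrt{\tfrac{\tau}{\sigma}}\cos(\tau\theta)+\sqrt{\tfrac{\sigma}{\tau}}\cos(\sigma\theta)\Bigr).$$ Then $$|\theta_c-\theta_{\mathrm{asy}}|\le\frac{\pi^3}{a}x^2=\pi^3\frac{(\tau-\sigma)^2}{(\tau+\sigma)^3}.$$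
   Context: $\mathrm{round}(\cdot)$ denotes rounding to the nearest integer. The function $\dot q(\theta)$ is the velocity of the impulse response of $\ddot q+n\dot z+q=0$, $\ddot z-n\dot q+z=0$ at the resonance $\Omega_1/\Omega_2=\tau/\sigma$, reparametrised by $\theta=t/\sqrt{\tau\sigma}$. It is not the $\theta$-derivative of a function $q$. *)

(* Defs.v *)
From Stdlib Require Import Reals Lra Lia Arith ZArith.
Open Scope R_scope.

(* round y = nearest integer to y, ties rounded up: floor (y + 1/2).
   Int_part is the floor function on R. *)
Definition round (y : R) : Z := Int_part (y + / 2).

(* velocity of the impulse response at resonance Omega1/Omega2 = tau/sigma,
   in the variable theta = t / sqrt(tau sigma). *)
Definition qdot (rho0 : R) (tau sigma : nat) (theta : R) : R :=
  rho0 * (sqrt (INR tau / INR sigma) * cos (INR tau * theta)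
          + sqrt (INR sigma / INR tau) * cos (INR sigma * theta)).

(* Main.v *)
Require Import Defs.
From Stdlib Require Import Reals Lra Lia Psatz ZArith Arith.
Open Scope R_scope.

Lemma sin_approx2 w : sin_approx w 2 = w - w^3/6 + w^5/120.
Proof. unfold sin_approx, sin_term. simpl. field. Qed.
Lemma sin_approx1 w : sin_approx w 1 = w - w^3/6.
Proof. unfold sin_approx, sin_term. simpl. field. Qed.
Lemma cos_approx2 w : cos_approx w 2 = 1 - w^2/2 + w^4/24.
Proof. unfold cos_approx, cos_term. simpl. field. Qed.
Lemma cos_approx1 w : cos_approx w 1 = 1 - w^2/2.
Proof. unfold cos_approx, cos_term. simpl. field. Qed.

Lemma PI_gt3 : 3 < PI.
Proof. pose proof PI2_3_2. lra. Qed.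

Lemma PI_lt : PI < 32/10.
Proof.
  destruct (Rlt_or_le PI (32/10)) as [h|h]; [exact h|].
  exfalso.
  destruct (cos_bound (16/10) 0) as [_ H]; try lra.
  replace (2 * (0+1))%nat with 2%nat in H by reflexivity.
  rewrite cos_approx2 in H.
  assert (cos (16/10) >= 0).
  { destruct (Rle_lt_or_eq_dec (16/10) (PI/2)) as [h1|h1]; [lra| |].
    - left. apply cos_gt_0; lra.
    - right. rewrite h1. rewrite cos_PI2. reflexivity. }
  lra.
Qed.

Lemma tan_w_pos w : 0 <= w <= 11/10 -> 0 <= tan w - w <= w^3.
Proof.
  intros Hw. pose proof PI_gt3.
  assert (Hc : 0 < cos w) by (apply cos_gt_0; lra).
  destruct (sin_bound w 0) as [Hs1 Hs2]; try lra.
  replace (2 * 0 + 1)%nat with 1%nat in Hs1 by reflexivity.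
  replace (2 * (0+1))%nat with 2%nat in Hs2 by reflexivity.
  rewrite sin_approx1 in Hs1. rewrite sin_approx2 in Hs2.
  destruct (cos_bound w 0) as [Hc1 Hc2]; try lra.
  replace (2 * 0 + 1)%nat with 1%nat in Hc1 by reflexivity.
  replace (2 * (0+1))%nat with 2%nat in Hc2 by reflexivity.
  rewrite cos_approx1 in Hc1. rewrite cos_approx2 in Hc2.
  unfold tan.
  assert (A : w * cos w <= sin w).
  { assert (w * cos w <= w * (1 - w^2/2 + w^4/24)) by (apply Rmult_le_compat_l; lra).
    assert (w * (1 - w^2/2 + w^4/24) <= w - w^3/6).
    { assert (0 <= w^3 * (1/3 - w^2/24)).
      { apply Rmult_le_pos. apply pow_le; lra. nra. }
      nra. }
    lra. }
  assert (B : sin w <= (w + w^3) * cos w).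
  { assert ((w + w^3) * (1 - w^2/2) <= (w + w^3) * cos w).
    { apply Rmult_le_compat_l; try lra. assert (0 <= w^3) by (apply pow_le; lra). lra. }
    assert (w - w^3/6 + w^5/120 <= (w + w^3) * (1 - w^2/2)).
    { assert (0 <= w^3 * (2/3 - 61 * w^2/120)).
      { apply Rmult_le_pos. apply pow_le; lra. nra. }
      nra. }
    lra. }
  split.
  - apply Rmult_le_reg_r with (cos w); auto.
    replace ((sin w / cos w - w) * cos w) with (sin w - w * cos w) by (field; lra). lra.
  - apply Rmult_le_reg_r with (cos w); auto.
    replace ((sin w / cos w - w) * cos w) with (sin w - w * cos w) by (field; lra). lra.
Qed.

Lemma tan_w w : Rabs w <= 11/10 -> Rabs (tan w - w) <= Rabs w ^ 3.
Proof.
  intros H. destruct (Rle_or_lt 0 w) as [h|h].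
  - rewrite (Rabs_pos_eq w h) in *. pose proof (tan_w_pos w (conj h H)).
    rewrite Rabs_pos_eq; lra.
  - rewrite (Rabs_left w h) in *. pose proof (tan_w_pos (-w) ltac:(lra)).
    rewrite tan_neg in H0. rewrite Rabs_left1; [|nra].
    replace ((-w)^3) with (-(w^3)) in H0 by ring. lra.
Qed.

Lemma tan_mvt a b : -PI/2 < a < PI/2 -> -PI/2 < b < PI/2 -> a < b ->
  exists c, tan b - tan a = (1 + tan c ^ 2) * (b - a).
Proof.
  intros Ha Hb Hab.
  destruct (MVT_cor2 tan (fun c => 1 + tan c ^ 2) a b Hab) as [c [Hc _]].
  - intros c Hc. assert (Hc' : -PI/2 < c < PI/2) by lra.
    apply derive_pt_eq_1 with (derivable_pt_tan c Hc').
    apply derive_pt_tan.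
  - exists c. exact Hc.
Qed.

Lemma tan_diff a b : -PI/2 < a < PI/2 -> -PI/2 < b < PI/2 ->
  2 * Rabs (b - a) <= Rabs ((b + tan b) - (a + tan a)).
Proof.
  intros Ha Hb. destruct (Rtotal_order a b) as [h|[h|h]].
  - destruct (tan_mvt a b Ha Hb h) as [c Hc].
    replace ((b + tan b) - (a + tan a)) with ((2 + tan c ^2) * (b - a)) by lra.
    rewrite Rabs_mult. rewrite (Rabs_pos_eq (2 + _)) by (pose proof (pow2_ge_0 (tan c)); lra).
    pose proof (pow2_ge_0 (tan c)). pose proof (Rabs_pos (b-a)). nra.
  - subst. replace (b - b) with 0 by ring. rewrite Rabs_R0. pose proof (Rabs_pos ((b + tan b) - (b + tan b))). lra.
  - destruct (tan_mvt b a Hb Ha h) as [c Hc].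
    replace ((b + tan b) - (a + tan a)) with (-((2 + tan c ^2) * (a - b))) by lra.
    rewrite Rabs_Ropp, Rabs_mult. rewrite (Rabs_pos_eq (2 + _)) by (pose proof (pow2_ge_0 (tan c)); lra).
    rewrite <- Rabs_Ropp. replace (- (b - a)) with (a - b) by ring.
    pose proof (pow2_ge_0 (tan c)). pose proof (Rabs_pos (a-b)). nra.
Qed.

Lemma core x mu ua uc : 0 < x < 1 -> Rabs mu <= PI * x / 2 ->
  (1/3 < x < 1/2 -> mu = PI/2 - PI * x) ->
  - (PI/2) < ua < PI/2 -> - (PI/2) < uc < PI/2 ->
  ua + tan ua = mu / x ->
  cos uc * sin (mu - x * uc) = x * sin uc * cos (mu - x * uc) ->
  Rabs (uc - ua) <= PI ^ 3 * x ^ 2 / 2.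
Proof.
  intros Hx Hmu Hmid Ha Hc Hasy Heq.
  pose proof PI_gt3. pose proof PI_lt.
  destruct (Rle_or_lt (12/25) x) as [Hbig|Hsmall].
  - assert (Rabs (uc - ua) < PI) by (apply Rabs_def1; lra).
    assert (9 * x^2 <= PI^2 * x^2) by (apply Rmult_le_compat_r; [nra|nra]).
    assert (2 <= PI^2 * x^2) by nra.
    replace (PI ^ 3 * x ^ 2 / 2) with (PI * (PI^2 * x^2) / 2) by field.
    assert (PI * 2 <= PI * (PI^2 * x^2)) by (apply Rmult_le_compat_l; lra). lra.
  - set (w := mu - x * uc) in *.
    assert (Hu : Rabs uc <= PI/2) by (apply Rabs_le; lra).
    assert (Hw1 : Rabs w <= PI * x).
    { unfold w. eapply Rle_trans. apply Rabs_triang.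
      rewrite Rabs_Ropp, Rabs_mult, (Rabs_pos_eq x) by lra. nra. }
    assert (Hw2 : Rabs w <= 11/10).
    { destruct (Rle_or_lt x (1/3)) as [h|h].
      - assert (PI * x <= 32/10 * (1/3)) by (apply Rmult_le_compat; lra). lra.
      - unfold w. assert (hm : 1/3 < x < 1/2) by lra. rewrite (Hmid hm).
        assert (x * uc <= x * (PI/2)) by (apply Rmult_le_compat_l; lra).
        assert (x * (-(PI/2)) <= x * uc) by (apply Rmult_le_compat_l; lra).
        assert (PI * (1 - x) <= 32/10 * (2/3)) by (apply Rmult_le_compat; lra).
        assert (0 <= PI * (3*x - 1) <= 32/10 * (11/25)) by (split; [apply Rmult_le_pos|apply Rmult_le_compat]; lra).
        apply Rabs_le. split; lra. }
    assert (Hcw : 0 < cos w) by (apply cos_gt_0; pose proof (Rle_abs w); pose proof (Rle_abs (-w)); rewrite Rabs_Ropp in *; lra).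
    assert (Hcu : 0 < cos uc) by (apply cos_gt_0; lra).
    assert (Ht : tan uc = tan w / x).
    { unfold tan. field_simplify_eq; try lra.
    }
    assert (Hg : (uc + tan uc) - (ua + tan ua) = (tan w - w) / x).
    { rewrite Ht, Hasy. unfold w. field. lra. }
    pose proof (tan_diff ua uc ltac:(lra) ltac:(lra)) as Hd.
    rewrite Hg in Hd.
    pose proof (tan_w w Hw2) as Htw.
    unfold Rdiv in Hd. rewrite Rabs_mult, Rabs_inv, (Rabs_pos_eq x) in Hd by lra.
    assert (Rabs w ^ 3 <= (PI * x)^3) by (apply pow_incr; split; [apply Rabs_pos|lra]).
    assert (2 * Rabs (uc - ua) * x <= Rabs (tan w - w)).
    { apply Rmult_le_compat_r with (r:=x) in Hd; [|lra].
      replace (Rabs (tan w - w) * / x * x) with (Rabs (tan w - w)) in Hd by (field; lra). lra. }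
    assert (2 * Rabs (uc - ua) * x <= PI^3 * x^3) by (replace (PI^3 * x^3) with ((PI*x)^3) by ring; lra).
    apply Rmult_le_reg_r with (2 * x). lra.
    replace (PI ^ 3 * x ^ 2 / 2 * (2 * x)) with (PI^3 * x^3) by field. lra.
Qed.

Theorem theorem4 (tau sigma : nat) (rho0 : R) :
  (0 < sigma)%nat -> (sigma < tau)%nat -> Nat.gcd tau sigma = 1%nat ->
  ((tau - sigma) mod 4 <> 2)%nat -> rho0 <> 0 ->
  let a := INR (tau + sigma) in
  let b := INR (tau - sigma) in
  let x := b / a in
  let k := round (1 / (2 * x)) in
  let mu := PI / 2 - IZR k * PI * x in
  let s := mu / x in
  forall u_asy : R, - (PI / 2) < u_asy < PI / 2 -> u_asy + tan u_asy = s ->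
  let theta_asy := PI / b + 2 / a * (u_asy - s) in
  forall theta_c u_c : R, - (PI / 2) < u_c < PI / 2 ->
  a / 2 * theta_c = IZR k * PI + u_c ->
  qdot rho0 tau sigma theta_c = 0 ->
  Rabs (theta_c - theta_asy) <= PI ^ 3 / a * x ^ 2 /\
  PI ^ 3 / a * x ^ 2 = PI ^ 3 * (b ^ 2 / a ^ 3).
Proof.
  intros Hs Hst _ _ Hrho a b x k mu s ua Hua Hasy theta_asy th uc Huc Hth Hq.
  pose proof PI_gt3 as HPI.
  assert (HS : 0 < INR sigma) by (apply lt_0_INR; lia).
  assert (HT : 0 < INR tau) by (apply lt_0_INR; lia).
  assert (HTS : INR sigma < INR tau) by (apply lt_INR; lia).
  assert (Ha : a = INR tau + INR sigma) by (unfold a; apply plus_INR).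
  assert (Hb : b = INR tau - INR sigma) by (unfold b; apply minus_INR; lia).
  assert (Hapos : 0 < a) by lra.
  assert (Hbpos : 0 < b) by lra.
  assert (Hx : 0 < x < 1).
  { unfold x. split. apply Rdiv_lt_0_compat; lra.
    apply Rmult_lt_reg_r with a; auto. unfold Rdiv. rewrite Rmult_assoc, Rinv_l; lra. }
  set (y := 1 / (2 * x)) in *.
  assert (Hy : PI / 2 = PI * x * y) by (unfold y; field; lra).
  destruct (base_Int_part (y + / 2)) as [Hk1 Hk2].
  change (IZR (Int_part (y + / 2))) with (IZR k) in Hk1, Hk2.
  assert (Hmu : mu = PI * x * (y - IZR k)) by (unfold mu; rewrite Hy; ring).
  assert (Hmub : Rabs mu <= PI * x / 2).
  { rewrite Hmu. rewrite Rabs_mult, (Rabs_pos_eq (PI * x)) by nra.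
    assert (Rabs (y - IZR k) <= 1/2) by (apply Rabs_le; lra).
    assert (0 < PI * x) by nra. nra. }
  assert (Hmid : 1/3 < x < 1/2 -> mu = PI/2 - PI * x).
  { intros hx.
    assert (1 < y < 3/2).
    { unfold y. split.
      - apply Rmult_lt_reg_r with (2*x); [lra|]. field_simplify; lra.
      - apply Rmult_lt_reg_r with (2*x); [lra|]. field_simplify; lra. }
    assert (k = 1%Z).
    { assert (IZR k < 2) by lra. assert (0 < IZR k) by lra.
      apply lt_IZR in H0. apply lt_IZR in H1. lia. }
    unfold mu. rewrite H0. simpl. ring. }
  assert (Hqe : INR tau * cos (INR tau * th) + INR sigma * cos (INR sigma * th) = 0).
  { unfold qdot in Hq. apply Rmult_integral in Hq. destruct Hq as [Hq|Hq]; [contradiction|].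
    rewrite (sqrt_div_alt _ _ HS), (sqrt_div_alt _ _ HT) in Hq.
    assert (hs : 0 < sqrt (INR sigma)) by (apply sqrt_lt_R0; lra).
    assert (ht : 0 < sqrt (INR tau)) by (apply sqrt_lt_R0; lra).
    assert (E : sqrt (INR tau) * sqrt (INR sigma) *
      (sqrt (INR tau) / sqrt (INR sigma) * cos (INR tau * th) +
       sqrt (INR sigma) / sqrt (INR tau) * cos (INR sigma * th)) =
      (sqrt (INR tau) * sqrt (INR tau)) * cos (INR tau * th) +
      (sqrt (INR sigma) * sqrt (INR sigma)) * cos (INR sigma * th)) by (field; lra).
    rewrite Hq, Rmult_0_r, !sqrt_sqrt in E by lra. lra. }
  set (phi := a / 2 * th) in *.
  set (psi := b / 2 * th).
  assert (ET : INR tau * th = phi + psi) by (unfold phi, psi; rewrite Ha, Hb; field).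
  assert (ES : INR sigma * th = phi - psi) by (unfold phi, psi; rewrite Ha, Hb; field).
  rewrite ET, ES, cos_plus, cos_minus in Hqe.
  assert (Hqe2 : a * cos phi * cos psi - b * sin phi * sin psi = 0) by (rewrite Ha, Hb; lra).
  set (C := cos (IZR k * PI)).
  assert (Hsk : sin (IZR k * PI) = 0) by (apply sin_eq_0_1; exists k; reflexivity).
  assert (HC : C * C = 1).
  { pose proof (sin2_cos2 (IZR k * PI)). unfold Rsqr in H. rewrite Hsk in H. unfold C. lra. }
  assert (Hcphi : cos phi = C * cos uc) by (rewrite Hth, cos_plus, Hsk; unfold C; ring).
  assert (Hsphi : sin phi = C * sin uc) by (rewrite Hth, sin_plus, Hsk; unfold C; ring).
  set (w := mu - x * uc).
  assert (Hpsi : psi = PI / 2 - w).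
  { assert (psi = x * phi) by (unfold psi, phi, x; field; lra).
    rewrite H, Hth. unfold w, mu. ring. }
  rewrite Hpsi, cos_shift, sin_shift, Hcphi, Hsphi in Hqe2.
  assert (Heq : cos uc * sin w = x * sin uc * cos w).
  { assert (C * (a * cos uc * sin w - b * sin uc * cos w) = 0) by lra.
    apply Rmult_integral in H. destruct H as [H|H]; [rewrite H in HC; lra|].
    unfold x. apply Rmult_eq_reg_l with a; [|lra]. field_simplify; lra. }
  pose proof (core x mu ua uc Hx Hmub Hmid Hua Huc Hasy Heq) as Hcore.
  assert (Hdiff : th - theta_asy = 2 / a * (uc - ua)).
  { unfold theta_asy, s. unfold phi in Hth.
    assert (th = 2 / a * (IZR k * PI + uc)) by (rewrite <- Hth; field; lra).
    rewrite H. unfold mu, x. field. lra. }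
  split.
  - rewrite Hdiff, Rabs_mult, (Rabs_pos_eq (2/a)) by (apply Rlt_le, Rdiv_lt_0_compat; lra).
    replace (PI ^ 3 / a * x ^ 2) with (2 / a * (PI ^ 3 * x ^ 2 / 2)) by (field; lra).
    apply Rmult_le_compat_l; [apply Rlt_le, Rdiv_lt_0_compat; lra | exact Hcore].
  - unfold x. field. lra.
Qed.
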